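(* Let $\mathcal{C}$ be a rigid monoidal category. An object $f:A\to B$ of $\mathrm{Arr}(\mathcal{C})$ (with its pointwise monoidal structure) has a dual if and only if $f$ is an isomorphism in $\mathcal{C}$.
   Context: $\mathrm{Arr}(\mathcal{C})$ is the arrow category: objects are morphisms $h:A\to B$ of $\mathcal{C}$, morphisms $(A,B,h)\to(A',B',h')$ are pairs $(\phi_A,\phi_B)$ with $h'\circ\phi_A=\phi_B\circ h$, composition componentwise. Pointwise monoidal structure: $(f:A_1\to B_1)\otimes(g:A_2\to B_2)=f\otimes g:A_1\otimes A_2\to B_1\otimes B_2$, morphisms tensored componentwise, unit object $\mathrm{id}_{\mathbb{I}}$, associator and unitors componentwise from $\mathcal{C}$. Rigid means every object has (left and right) duals, with evaluation and coevaluation maps satisfying the snake identities. *)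

(* Defs.v *)
Set Implicit Arguments.
Unset Strict Implicit.

Record MonData := MkMonData {
  ob : Type;
  hom : ob -> ob -> Type;
  idm : forall A, hom A A;
  comp : forall A B C, hom B C -> hom A B -> hom A C;
  tens : ob -> ob -> ob;
  tensm : forall A B C D, hom A B -> hom C D -> hom (tens A C) (tens B D);
  unit : ob;
  assoc : forall A B C, hom (tens (tens A B) C) (tens A (tens B C));
  assoc_inv : forall A B C, hom (tens A (tens B C)) (tens (tens A B) C);
  lunit : forall A, hom (tens unit A) A;
  lunit_inv : forall A, hom A (tens unit A);
  runit : forall A, hom (tens A unit) A;
  runit_inv : forall A, hom A (tens A unit) }.

Arguments idm {m} A.
Arguments comp {m A B C} _ _.
Arguments tens {m} _ _.
Arguments tensm {m A B C D} _ _.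
Arguments unit {m}.
Arguments assoc {m} A B C.
Arguments assoc_inv {m} A B C.
Arguments lunit {m} A.
Arguments lunit_inv {m} A.
Arguments runit {m} A.
Arguments runit_inv {m} A.

Record IsMonoidal (M : MonData) : Prop := {
  comp_assoc : forall (A B C D : ob M) (f : hom A B) (g : hom B C) (h : hom C D),
      comp h (comp g f) = comp (comp h g) f;
  comp_id_l : forall (A B : ob M) (f : hom A B), comp (idm B) f = f;
  comp_id_r : forall (A B : ob M) (f : hom A B), comp f (idm A) = f;
  tensm_id : forall (A B : ob M), tensm (idm A) (idm B) = idm (tens A B);
  tensm_comp : forall (A1 B1 C1 A2 B2 C2 : ob M)
      (f1 : hom A1 B1) (g1 : hom B1 C1) (f2 : hom A2 B2) (g2 : hom B2 C2),
      tensm (comp g1 f1) (comp g2 f2) = comp (tensm g1 g2) (tensm f1 f2);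
  assoc_iso1 : forall A B C : ob M, comp (assoc_inv A B C) (assoc A B C) = idm _;
  assoc_iso2 : forall A B C : ob M, comp (assoc A B C) (assoc_inv A B C) = idm _;
  lunit_iso1 : forall A : ob M, comp (lunit_inv A) (lunit A) = idm _;
  lunit_iso2 : forall A : ob M, comp (lunit A) (lunit_inv A) = idm _;
  runit_iso1 : forall A : ob M, comp (runit_inv A) (runit A) = idm _;
  runit_iso2 : forall A : ob M, comp (runit A) (runit_inv A) = idm _;
  assoc_nat : forall (A A' B B' C C' : ob M) (f : hom A A') (g : hom B B') (h : hom C C'),
      comp (assoc A' B' C') (tensm (tensm f g) h) = comp (tensm f (tensm g h)) (assoc A B C);
  lunit_nat : forall (A B : ob M) (f : hom A B),
      comp (lunit B) (tensm (idm unit) f) = comp f (lunit A);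
  runit_nat : forall (A B : ob M) (f : hom A B),
      comp (runit B) (tensm f (idm unit)) = comp f (runit A);
  pentagon : forall A B C D : ob M,
      comp (assoc A B (tens C D)) (assoc (tens A B) C D)
      = comp (tensm (idm A) (assoc B C D))
             (comp (assoc A (tens B C) D) (tensm (assoc A B C) (idm D)));
  triangle : forall A B : ob M,
      comp (tensm (idm A) (lunit B)) (assoc A unit B) = tensm (runit A) (idm B) }.

Record MonCat := MkMonCat { mdata :> MonData; mon_ax : IsMonoidal mdata }.

Definition is_iso (M : MonData) (A B : ob M) (f : hom A B) : Prop :=
  exists g : hom B A, comp g f = idm A /\ comp f g = idm B.

Definition is_left_dual (M : MonData) (X Xs : ob M)
    (ev : hom (tens Xs X) unit) (coev : hom unit (tens X Xs)) : Prop :=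
  comp (runit X) (comp (tensm (idm X) ev)
       (comp (assoc X Xs X) (comp (tensm coev (idm X)) (lunit_inv X)))) = idm X
  /\
  comp (lunit Xs) (comp (tensm ev (idm Xs))
       (comp (assoc_inv Xs X Xs) (comp (tensm (idm Xs) coev) (runit_inv Xs)))) = idm Xs.

Definition has_left_dual (M : MonData) (X : ob M) : Prop :=
  exists (Xs : ob M) (ev : hom (tens Xs X) unit) (coev : hom unit (tens X Xs)),
    is_left_dual ev coev.

(* X has a right dual Xs iff X is a left dual of Xs. *)
Definition has_right_dual (M : MonData) (X : ob M) : Prop :=
  exists (Xs : ob M) (ev : hom (tens X Xs) unit) (coev : hom unit (tens Xs X)),
    is_left_dual ev coev.

Definition rigid (M : MonData) : Prop :=
  forall X : ob M, has_left_dual X /\ has_right_dual X.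

Record ArrOb (M : MonData) := MkArrOb { asrc : ob M; atgt : ob M; amor : hom asrc atgt }.
Arguments MkArrOb {M asrc atgt} amor.

Definition ArrHom (M : MonData) (X Y : ArrOb M) : Type :=
  { p : hom (asrc X) (asrc Y) * hom (atgt X) (atgt Y)
  | comp (amor Y) (fst p) = comp (snd p) (amor X) }.

Section Arr.
Variable C : MonCat.
Let H := mon_ax C.

Lemma inv_nat (A A' B B' : ob C) (a : hom A B) (ai : hom B A) (b : hom A' B') (bi : hom B' A')
  (x : hom A A') (y : hom B B') :
  comp a ai = idm B -> comp bi b = idm A' -> comp b x = comp y a ->
  comp x ai = comp bi y.
Proof.
  intros E1 E2 E3.
  transitivity (comp (comp bi b) (comp x ai)).
  { rewrite E2, (comp_id_l H); reflexivity. }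
  rewrite <- (comp_assoc H), (comp_assoc H ai x b), E3.
  rewrite <- (comp_assoc H ai a y), E1, (comp_id_r H). reflexivity.
Qed.

Definition arr_id (X : ArrOb C) : ArrHom X X.
Proof.
  exists (idm (asrc X), idm (atgt X)); simpl.
  rewrite (comp_id_l H), (comp_id_r H); reflexivity.
Defined.

Definition arr_comp (X Y Z : ArrOb C) (g : ArrHom Y Z) (f : ArrHom X Y) : ArrHom X Z.
Proof.
  exists (comp (fst (proj1_sig g)) (fst (proj1_sig f)),
          comp (snd (proj1_sig g)) (snd (proj1_sig f))).
  destruct g as [[g1 g2] Hg], f as [[f1 f2] Hf]; simpl in *.
  rewrite (comp_assoc H), Hg, <- (comp_assoc H), Hf, (comp_assoc H); reflexivity.
Defined.

Definition arr_tens (X Y : ArrOb C) : ArrOb C := MkArrOb (tensm (amor X) (amor Y)).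

Definition arr_tensm (X X' Y Y' : ArrOb C) (p : ArrHom X X') (q : ArrHom Y Y')
  : ArrHom (arr_tens X Y) (arr_tens X' Y').
Proof.
  exists (tensm (fst (proj1_sig p)) (fst (proj1_sig q)),
          tensm (snd (proj1_sig p)) (snd (proj1_sig q))).
  destruct p as [[p1 p2] Hp], q as [[q1 q2] Hq]; simpl in *.
  rewrite <- !(tensm_comp H), Hp, Hq; reflexivity.
Defined.

Definition arr_unit : ArrOb C := MkArrOb (idm (@unit C)).

Definition arr_assoc (X Y Z : ArrOb C)
  : ArrHom (arr_tens (arr_tens X Y) Z) (arr_tens X (arr_tens Y Z)).
Proof.
  exists (assoc (asrc X) (asrc Y) (asrc Z), assoc (atgt X) (atgt Y) (atgt Z)); simpl.
  symmetry; apply (assoc_nat H).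
Defined.

Definition arr_assoc_inv (X Y Z : ArrOb C)
  : ArrHom (arr_tens X (arr_tens Y Z)) (arr_tens (arr_tens X Y) Z).
Proof.
  exists (assoc_inv (asrc X) (asrc Y) (asrc Z), assoc_inv (atgt X) (atgt Y) (atgt Z)); simpl.
  apply inv_nat with (a := assoc _ _ _) (b := assoc _ _ _).
  - apply (assoc_iso2 H).
  - apply (assoc_iso1 H).
  - apply (assoc_nat H).
Defined.

Definition arr_lunit (X : ArrOb C) : ArrHom (arr_tens arr_unit X) X.
Proof.
  exists (lunit (asrc X), lunit (atgt X)); simpl.
  symmetry; apply (lunit_nat H).
Defined.

Definition arr_lunit_inv (X : ArrOb C) : ArrHom X (arr_tens arr_unit X).
Proof.
  exists (lunit_inv (asrc X), lunit_inv (atgt X)); simpl.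
  apply inv_nat with (a := lunit _) (b := lunit _).
  - apply (lunit_iso2 H).
  - apply (lunit_iso1 H).
  - apply (lunit_nat H).
Defined.

Definition arr_runit (X : ArrOb C) : ArrHom (arr_tens X arr_unit) X.
Proof.
  exists (runit (asrc X), runit (atgt X)); simpl.
  symmetry; apply (runit_nat H).
Defined.

Definition arr_runit_inv (X : ArrOb C) : ArrHom X (arr_tens X arr_unit).
Proof.
  exists (runit_inv (asrc X), runit_inv (atgt X)); simpl.
  apply inv_nat with (a := runit _) (b := runit _).
  - apply (runit_iso2 H).
  - apply (runit_iso1 H).
  - apply (runit_nat H).
Defined.

Definition Arr : MonData :=
  @MkMonData (ArrOb C) (@ArrHom C) arr_id arr_comp arr_tens arr_tensm arr_unit
    arr_assoc arr_assoc_inv arr_lunit arr_lunit_inv arr_runit arr_runit_inv.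

End Arr.

(* Main.v *)
Require Import Defs.
From Stdlib Require Import ProofIrrelevance.
Set Implicit Arguments.
Unset Strict Implicit.

Section S.
Variable C : MonCat.
Let H := mon_ax C.
Local Notation "g ∘ f" := (comp (m:=mdata C) g f) (at level 40, left associativity).
Local Notation "f ⊗ g" := (tensm (m:=mdata C) f g) (at level 35).

Lemma ca (A B X D : ob C) (f : hom A B) (g : hom B X) (h : hom X D) :
  h ∘ (g ∘ f) = (h ∘ g) ∘ f.
Proof. apply (comp_assoc H). Qed.
Lemma cl (A B : ob C) (f : hom A B) : idm B ∘ f = f. Proof. apply (comp_id_l H). Qed.
Lemma cr (A B : ob C) (f : hom A B) : f ∘ idm A = f. Proof. apply (comp_id_r H). Qed.
Lemma ti (A B : ob C) : idm A ⊗ idm B = idm (tens A B). Proof. apply (tensm_id H). Qed.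
Lemma tc (A1 B1 C1 A2 B2 C2 : ob C) (f1 : hom A1 B1) (g1 : hom B1 C1) (f2 : hom A2 B2) (g2 : hom B2 C2) :
  (g1 ⊗ g2) ∘ (f1 ⊗ f2) = (g1 ∘ f1) ⊗ (g2 ∘ f2).
Proof. symmetry; apply (tensm_comp H). Qed.

Lemma ext2 (X Y Z W : ob C) (x : hom Y Z) (y : hom X Y) (u : hom W Z) (v : hom X W) :
  x ∘ y = u ∘ v -> forall (R : ob C) (r : hom R X), x ∘ (y ∘ r) = u ∘ (v ∘ r).
Proof. intros E R r. rewrite !ca, E; reflexivity. Qed.

Lemma lin (A B : ob C) (f : hom A B) : lunit_inv B ∘ f = (idm unit ⊗ f) ∘ lunit_inv A.
Proof.
  symmetry; apply (inv_nat (C:=C)) with (a := lunit _) (b := lunit _).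
  apply (lunit_iso2 H). apply (lunit_iso1 H). apply (lunit_nat H).
Qed.
Lemma rin (A B : ob C) (f : hom A B) : runit_inv B ∘ f = (f ⊗ idm unit) ∘ runit_inv A.
Proof.
  symmetry; apply (inv_nat (C:=C)) with (a := runit _) (b := runit _).
  apply (runit_iso2 H). apply (runit_iso1 H). apply (runit_nat H).
Qed.
Lemma ain (A A' B B' X X' : ob C) (f : hom A A') (g : hom B B') (h : hom X X') :
  assoc_inv A' B' X' ∘ (f ⊗ (g ⊗ h)) = ((f ⊗ g) ⊗ h) ∘ assoc_inv A B X.
Proof.
  symmetry; apply (inv_nat (C:=C)) with (a := assoc _ _ _) (b := assoc _ _ _).
  apply (assoc_iso2 H). apply (assoc_iso1 H). apply (assoc_nat H).
Qed.
Lemma an (A A' B B' X X' : ob C) (f : hom A A') (g : hom B B') (h : hom X X') :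
  assoc A' B' X' ∘ ((f ⊗ g) ⊗ h) = (f ⊗ (g ⊗ h)) ∘ assoc A B X.
Proof. apply (assoc_nat H). Qed.
Lemma ln (A B : ob C) (f : hom A B) : lunit B ∘ (idm unit ⊗ f) = f ∘ lunit A.
Proof. apply (lunit_nat H). Qed.
Lemma rn (A B : ob C) (f : hom A B) : runit B ∘ (f ⊗ idm unit) = f ∘ runit A.
Proof. apply (runit_nat H). Qed.

Lemma ext1 (X Y Z : ob C) (x : hom Y Z) (y : hom X Y) (u : hom X Z) :
  x ∘ y = u -> forall (R : ob C) (r : hom R X), x ∘ (y ∘ r) = u ∘ r.
Proof. intros E R r. rewrite ca, E; reflexivity. Qed.

Arguments ext2 {X Y Z W x y u v} _ {R} r.
Arguments ext1 {X Y Z x y u} _ {R} r.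
Ltac nrm := rewrite <- ?ca.
Ltac rw E := first [ rewrite (ext2 E) | rewrite (ext1 E) | rewrite E ]; nrm.
Ltac rwl E := first [ rewrite <- (ext2 E) | rewrite <- (ext1 E) | rewrite <- E ]; nrm.

Lemma iso_left (A B S T : ob C) (f : hom A B) (g : hom S T)
  (e1 : hom (tens S A) unit) (e2 : hom (tens T B) unit)
  (c1 : hom unit (tens A S)) (c2 : hom unit (tens B T))
  (He : idm unit ∘ e1 = e2 ∘ (g ⊗ f)) (Hc : (f ⊗ g) ∘ c1 = c2 ∘ idm unit)
  (s1 : runit A ∘ ((idm A ⊗ e1) ∘ (assoc A S A ∘ ((c1 ⊗ idm A) ∘ lunit_inv A))) = idm A)
  (s2 : runit B ∘ ((idm B ⊗ e2) ∘ (assoc B T B ∘ ((c2 ⊗ idm B) ∘ lunit_inv B))) = idm B) :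
  is_iso f.
Proof.
  rewrite cl in He; rewrite cr in Hc.
  exists (runit A ∘ ((idm A ⊗ (e2 ∘ (g ⊗ idm B))) ∘ (assoc A S B ∘ ((c1 ⊗ idm B) ∘ lunit_inv B)))).
  split.
  - nrm. rw (lin f).
    assert (E1 : (c1 ⊗ idm B) ∘ (idm unit ⊗ f) = ((idm A ⊗ idm S) ⊗ f) ∘ (c1 ⊗ idm A)).
    { rewrite !tc, ti, !cl, !cr; reflexivity. }
    rw E1. rw (an (idm A) (idm S) f).
    assert (E2 : (idm A ⊗ (e2 ∘ (g ⊗ idm B))) ∘ (idm A ⊗ (idm S ⊗ f)) = idm A ⊗ e1).
    { rewrite tc, cl, <- ca, tc, cl, cr, He; reflexivity. }
    rw E2. exact s1.
  - nrm. rwl (rn f).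
    assert (E1 : (f ⊗ idm unit) ∘ (idm A ⊗ (e2 ∘ (g ⊗ idm B))) = (idm B ⊗ e2) ∘ (f ⊗ (g ⊗ idm B))).
    { rewrite !tc, !cl, !cr; reflexivity. }
    rw E1. rwl (an f g (idm B)).
    assert (E2 : ((f ⊗ g) ⊗ idm B) ∘ (c1 ⊗ idm B) = c2 ⊗ idm B).
    { rewrite tc, Hc, cl; reflexivity. }
    rw E2. exact s2.
Qed.
Lemma chain5 (X0 X1 X2 X3 X4 : ob C) (a : hom X1 X0) (b : hom X2 X1) (c : hom X3 X2)
  (d : hom X4 X3) (e : hom X0 X4) :
  a ∘ (b ∘ (c ∘ (d ∘ e))) = idm X0 -> forall R (r : hom R X0), a ∘ (b ∘ (c ∘ (d ∘ (e ∘ r)))) = r.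
Proof. intros E R r. transitivity (idm X0 ∘ r). { rewrite <- E. rewrite <- !ca. reflexivity. } apply cl. Qed.
Arguments chain5 {X0 X1 X2 X3 X4 a b c d e} _ {R} r.

Lemma iso_right (A B S T : ob C) (f : hom A B) (g : hom S T)
  (e1 : hom (tens A S) unit) (e2 : hom (tens B T) unit)
  (c1 : hom unit (tens S A)) (c2 : hom unit (tens T B))
  (He : idm unit ∘ e1 = e2 ∘ (f ⊗ g)) (Hc : (g ⊗ f) ∘ c1 = c2 ∘ idm unit)
  (s1 : lunit A ∘ ((e1 ⊗ idm A) ∘ (assoc_inv A S A ∘ ((idm A ⊗ c1) ∘ runit_inv A))) = idm A)
  (s2 : lunit B ∘ ((e2 ⊗ idm B) ∘ (assoc_inv B T B ∘ ((idm B ⊗ c2) ∘ runit_inv B))) = idm B) :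
  is_iso f.
Proof.
  rewrite cl in He; rewrite cr in Hc.
  exists (lunit A ∘ (((e2 ∘ (idm B ⊗ g)) ⊗ idm A) ∘ (assoc_inv B S A ∘ ((idm B ⊗ c1) ∘ runit_inv B)))).
  split.
  - nrm. rw (rin f).
    assert (E1 : (idm B ⊗ c1) ∘ (f ⊗ idm unit) = (f ⊗ (idm S ⊗ idm A)) ∘ (idm A ⊗ c1)).
    { rewrite !tc, ti, !cl, !cr; reflexivity. }
    rw E1. rw (ain f (idm S) (idm A)).
    assert (E2 : ((e2 ∘ (idm B ⊗ g)) ⊗ idm A) ∘ ((f ⊗ idm S) ⊗ idm A) = e1 ⊗ idm A).
    { rewrite tc, cl, <- ca, tc, cl, cr, He; reflexivity. }
    rw E2. exact s1.
  - nrm. rwl (ln f).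
    assert (E1 : (idm unit ⊗ f) ∘ ((e2 ∘ (idm B ⊗ g)) ⊗ idm A) = (e2 ⊗ idm B) ∘ ((idm B ⊗ g) ⊗ f)).
    { rewrite !tc, !cl, !cr; reflexivity. }
    rw E1. rwl (ain (idm B) g f).
    assert (E2 : (idm B ⊗ (g ⊗ f)) ∘ (idm B ⊗ c1) = idm B ⊗ c2).
    { rewrite tc, Hc, cl; reflexivity. }
    rw E2. exact s2.
Qed.

Lemma transp_l (X Xs Y : ob C) (ev : hom (tens Xs X) unit) (coev : hom unit (tens X Xs))
  (h : hom Y X) (hi : hom X Y) (hih : hi ∘ h = idm Y) (hhi : h ∘ hi = idm X) :
  is_left_dual ev coev -> is_left_dual (ev ∘ (idm Xs ⊗ h)) ((hi ⊗ idm Xs) ∘ coev).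
Proof.
  intros [s1 s2]; split.
  - assert (L : lunit_inv Y = (idm unit ⊗ hi) ∘ (lunit_inv X ∘ h)).
    { rewrite ca, <- lin, <- ca, hih, cr; reflexivity. }
    rewrite L; nrm.
    assert (E1 : (((hi ⊗ idm Xs) ∘ coev) ⊗ idm Y) ∘ (idm unit ⊗ hi) = ((hi ⊗ idm Xs) ⊗ hi) ∘ (coev ⊗ idm X)).
    { rewrite !tc, !cl, !cr; reflexivity. }
    rw E1. rw (an hi (idm Xs) hi).
    assert (E2 : (idm Y ⊗ (ev ∘ (idm Xs ⊗ h))) ∘ (hi ⊗ (idm Xs ⊗ hi)) = (hi ⊗ idm unit) ∘ (idm X ⊗ ev)).
    { rewrite !tc, <- ca, tc, hhi, !cl, ti, !cr; reflexivity. }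
    rw E2. rw (rn hi). rewrite (chain5 s1). exact hih.
  - assert (E1 : (ev ∘ (idm Xs ⊗ h)) ⊗ idm Xs = (ev ⊗ idm Xs) ∘ ((idm Xs ⊗ h) ⊗ idm Xs)).
    { rewrite tc, cl; reflexivity. }
    rewrite E1; nrm. rwl (ain (idm Xs) h (idm Xs)).
    assert (E2 : (idm Xs ⊗ (h ⊗ idm Xs)) ∘ (idm Xs ⊗ ((hi ⊗ idm Xs) ∘ coev)) = idm Xs ⊗ coev).
    { rewrite tc, cl, ca, tc, hhi, cl, ti, cl; reflexivity. }
    rw E2. exact s2.
Qed.

Lemma transp_r (X Xs Y : ob C) (ev : hom (tens Xs X) unit) (coev : hom unit (tens X Xs))
  (h : hom Y Xs) (hi : hom Xs Y) (hih : hi ∘ h = idm Y) (hhi : h ∘ hi = idm Xs) :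
  is_left_dual ev coev -> is_left_dual (ev ∘ (h ⊗ idm X)) ((idm X ⊗ hi) ∘ coev).
Proof.
  intros [s1 s2]; split.
  - assert (E1 : idm X ⊗ (ev ∘ (h ⊗ idm X)) = (idm X ⊗ ev) ∘ (idm X ⊗ (h ⊗ idm X))).
    { rewrite tc, cl; reflexivity. }
    rewrite E1; nrm. rwl (an (idm X) h (idm X)).
    assert (E2 : ((idm X ⊗ h) ⊗ idm X) ∘ (((idm X ⊗ hi) ∘ coev) ⊗ idm X) = coev ⊗ idm X).
    { rewrite tc, cl, ca, tc, hhi, cl, ti, cl; reflexivity. }
    rw E2. exact s1.
  - assert (L : runit_inv Y = (hi ⊗ idm unit) ∘ (runit_inv Xs ∘ h)).
    { rewrite ca, <- rin, <- ca, hih, cr; reflexivity. }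
    rewrite L; nrm.
    assert (E1 : (idm Y ⊗ ((idm X ⊗ hi) ∘ coev)) ∘ (hi ⊗ idm unit) = (hi ⊗ (idm X ⊗ hi)) ∘ (idm Xs ⊗ coev)).
    { rewrite !tc, !cl, !cr; reflexivity. }
    rw E1. rw (ain hi (idm X) hi).
    assert (E2 : ((ev ∘ (h ⊗ idm X)) ⊗ idm Y) ∘ ((hi ⊗ idm X) ⊗ hi) = (idm unit ⊗ hi) ∘ (ev ⊗ idm Xs)).
    { rewrite !tc, <- ca, tc, hhi, !cl, ti, !cr; reflexivity. }
    rw E2. rw (ln hi). rewrite (chain5 s2). exact hih.
Qed.
End S.

Lemma arr_eq (C : MonCat) (X Y : ArrOb C) (p q : ArrHom X Y) : proj1_sig p = proj1_sig q -> p = q.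
Proof.
  destruct p as [p Hp], q as [q Hq]; simpl; intros E; subst q.
  f_equal; apply proof_irrelevance.
Qed.

Theorem mainTheorem11 (C : MonCat) (HC : rigid C) (A B : ob C) (f : hom A B) :
  (has_left_dual (M := Arr C) (MkArrOb f) <-> is_iso f) /\
  (has_right_dual (M := Arr C) (MkArrOb f) <-> is_iso f).
Proof.
  pose proof (mon_ax C) as H.
  split; split.
  - intros [[S T g] [[[e1 e2] He] [[[c1 c2] Hc] [s1 s2]]]].
    apply (f_equal (@proj1_sig _ _)) in s1. cbn in s1, He, Hc.
    injection s1 as s1a s1b.
    exact (iso_left He Hc s1a s1b).
  - intros [fi [fif ffi]].
    destruct (HC A) as [[As [ev [coev Hd]]] _].
    pose proof (transp_l (h:=fi) (hi:=f) ffi fif Hd) as Hd'.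
    destruct Hd as [d1 d2], Hd' as [d1' d2'].
    unshelve eexists (MkArrOb (idm As)), (exist _ (ev, comp ev (tensm (idm As) fi)) _),
      (exist _ (coev, comp (tensm f (idm As)) coev) _).
    + cbn. rewrite (comp_id_l H), <- (comp_assoc H), <- (tensm_comp H), (comp_id_l H), fif. 
      rewrite (tensm_id H), (comp_id_r H). reflexivity.
    + cbn. rewrite (comp_id_r H). reflexivity.
    + split; apply arr_eq; cbn; f_equal; assumption.
  - intros [[S T g] [[[e1 e2] He] [[[c1 c2] Hc] [s1 s2]]]].
    apply (f_equal (@proj1_sig _ _)) in s2. cbn in s2, He, Hc.
    injection s2 as s2a s2b.
    exact (iso_right He Hc s2a s2b).
  - intros [fi [fif ffi]].
    destruct (HC A) as [_ [As [ev [coev Hd]]]].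
    pose proof (transp_r (h:=fi) (hi:=f) ffi fif Hd) as Hd'.
    destruct Hd as [d1 d2], Hd' as [d1' d2'].
    unshelve eexists (MkArrOb (idm As)), (exist _ (ev, comp ev (tensm fi (idm As))) _),
      (exist _ (coev, comp (tensm (idm As) f) coev) _).
    + cbn. rewrite (comp_id_l H), <- (comp_assoc H), <- (tensm_comp H), (comp_id_l H), fif. 
      rewrite (tensm_id H), (comp_id_r H). reflexivity.
    + cbn. rewrite (comp_id_r H). reflexivity.
    + split; apply arr_eq; cbn; f_equal; assumption.
Qed.
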